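(* Let $n\ge 2$, let $A\in\mathbb{R}^{n\times n}$ be symmetric with zero diagonal, let $\lambda\ge\max_i\sum_j|A_{ij}|$, and let $v^*\in\mathbb{R}^{n-1}$ with $v^*_i=A_{ni}$. Let $w^*=\Pi^{n-1}_{B\to\Delta}(v^* )\in\Delta(\lambda,2n-1)$. Then $\nabla\widetilde S(w^* )=0$ and $w^*$ is a global minimizer of $\widetilde S$ over $\Delta(\lambda,2n-1)$.
   Context: Ising model $\mathcal{D}(A,\theta)$ on $\{-1,1\}^n$: $\Pr[Z=z]\propto\exp\big(\sum_{i<j}A_{ij}z_iz_j+\sum_i\theta_iz_i\big)$, $A$ symmetric with zero diagonal. $\mathsf{B}(W,k)=\{x\in\mathbb{R}^k:\|x\|_1\le W\}$, $\Delta(W,k)=\{x\in\mathbb{R}^k:x\ge0,\sum_ix_i=W\}$. Maps: $\Pi^k_{B\to\Delta}:\mathsf{B}(W,k)\to\Delta(W,2k+1)$ with $\Pi^k_{B\to\Delta}(x)_{2k+1}=W-\|x\|_1$, $\Pi^k_{B\to\Delta}(x)_i=\max(x_i,0)$ and $\Pi^k_{B\to\Delta}(x)_{k+i}=\max(-x_i,0)$ for $i\in[k]$; $\Pi^k_{\Delta\to B}:\Delta(W,2k+1)\to\mathsf{B}(W,k)$ with $\Pi^k_{\Delta\to B}(u)_i=u_i-u_{i+k}$, $i\in[k]$. Simplex ISO: for $w\in\mathbb{R}^{2n-1}$, $\widetilde S(w)=\mathbb{E}_{Z\sim\mathcal{D}(A,0)}\big[\exp\big(-\sum_{j=1}^{n-1}(w_j-w_{n-1+j})Z_nZ_j\big)\big]$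 (which equals $S(\Pi^{n-1}_{\Delta\to B}(w))$ for the ISO $S(v)=\mathbb{E}[\exp(-\sum_{j=1}^{n-1}v_jZ_nZ_j)]$). *)

(* Defs.v *)
From Stdlib Require Import Reals Lra List.
Import ListNotations.
Open Scope R_scope.

(* Vectors/matrices are functions on nat, 0-indexed: coordinate i of the paper
   (1-indexed) is index i-1 here. *)

Fixpoint rsum (k : nat) (f : nat -> R) : R :=
  match k with
  | O => 0
  | S k' => rsum k' f + f k'
  end.

(* All points of {-1,1}^n, encoded as boolean lists of length n. *)
Fixpoint cube (n : nat) : list (list bool) :=
  match n with
  | O => [nil]
  | S m => flat_map (fun z => [true :: z; false :: z]) (cube m)
  end.

Definition spin (z : list bool) (i : nat) : R :=
  if nth i z false then 1 else -1.

Definition cube_sum (n : nat) (f : list bool -> R) : R :=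
  fold_right Rplus 0 (map f (cube n)).

Definition ising_energy (n : nat) (A : nat -> nat -> R) (theta : nat -> R)
  (z : list bool) : R :=
  rsum n (fun j => rsum j (fun i => A i j * spin z i * spin z j))
  + rsum n (fun i => theta i * spin z i).

Definition ising_expect (n : nat) (A : nat -> nat -> R) (theta : nat -> R)
  (f : list bool -> R) : R :=
  cube_sum n (fun z => exp (ising_energy n A theta z) * f z)
  / cube_sum n (fun z => exp (ising_energy n A theta z)).

(* Simplex ISO: Stilde(w) = E_{Z~D(A,0)}[exp(-sum_{j=1}^{n-1} (w_j - w_{n-1+j}) Z_n Z_j)]
   (0-indexed: j ranges over 0..n-2, Z_n is spin index n-1). *)
Definition Stilde (n : nat) (A : nat -> nat -> R) (w : nat -> R) : R :=
  ising_expect n A (fun _ => 0)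
    (fun z => exp (- rsum (n - 1)
        (fun j => (w j - w (n - 1 + j)%nat) * spin z (n - 1) * spin z j))).

Definition l1norm (k : nat) (x : nat -> R) : R := rsum k (fun i => Rabs (x i)).

Definition in_simplex (W : R) (m : nat) (x : nat -> R) : Prop :=
  (forall i, (i < m)%nat -> 0 <= x i) /\ rsum m x = W.

(* Pi^k_{B -> Delta} : B(W,k) -> Delta(W,2k+1), 0-indexed:
   index i < k : max(x_i,0); index k+i (i<k) : max(-x_i,0); index 2k : W - ||x||_1. *)
Definition piBD (W : R) (k : nat) (x : nat -> R) : nat -> R :=
  fun i =>
    if Nat.ltb i k then Rmax (x i) 0
    else if Nat.ltb i (2 * k) then Rmax (- x (i - k)%nat) 0
    else W - l1norm k x.

Definition upd (w : nat -> R) (i : nat) (t : R) : nat -> R :=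
  fun j => if Nat.eqb j i then t else w j.

(* Main.v *)
Require Import Defs.
From Stdlib Require Import Reals Lra Lia List FunctionalExtensionality.
From Coquelicot Require Import Coquelicot.
Import ListNotations.
Open Scope R_scope.

Lemma rsum_ext k f g : (forall i, (i < k)%nat -> f i = g i) -> rsum k f = rsum k g.
Proof. induction k; intros H; simpl; [reflexivity|]. rewrite IHk by (intros; apply H; lia). rewrite H by lia; reflexivity. Qed.

Lemma rsum_plus k f g : rsum k (fun i => f i + g i) = rsum k f + rsum k g.
Proof. induction k; simpl; [ring|]. rewrite IHk; ring. Qed.

Lemma rsum_scal k c f : rsum k (fun i => c * f i) = c * rsum k f.
Proof. induction k; simpl; [ring|]. rewrite IHk; ring. Qed.

Lemma rsum_zero k : rsum k (fun _ => 0) = 0.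
Proof. induction k; simpl; [ring|]. rewrite IHk; ring. Qed.

Lemma rsum_delta m k c g : (k < m)%nat ->
  rsum m (fun j => (if Nat.eqb j k then c else 0) * g j) = c * g k.
Proof.
  induction m; intros Hk; [lia|]. simpl.
  destruct (Nat.eq_dec k m) as [->|Hne].
  - rewrite Nat.eqb_refl. rewrite (rsum_ext m _ (fun _ => 0)).
    + rewrite rsum_zero; ring.
    + intros i Hi. destruct (Nat.eqb_spec i m); [lia|ring].
  - rewrite IHm by lia. destruct (Nat.eqb_spec m k); [lia|ring].
Qed.

Lemma cube_len m z : In z (cube m) -> length z = m.
Proof.
  revert z; induction m; simpl; intros z H.
  - destruct H as [<-|[]]; reflexivity.
  - apply in_flat_map in H as [y [Hy Hz]]. simpl in Hz.
    destruct Hz as [<-|[<-|[]]]; simpl; rewrite IHm; auto.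
Qed.

Lemma cube_nonnil m : cube m <> [].
Proof.
  induction m; simpl; [discriminate|].
  destruct (cube m); [congruence|]. simpl. discriminate.
Qed.

Lemma cube_sum_ext_in m f g : (forall z, In z (cube m) -> f z = g z) -> cube_sum m f = cube_sum m g.
Proof. intros H; unfold cube_sum. rewrite (map_ext_in f g); auto. Qed.

Lemma fr_flat l (f : list bool -> R) :
  fold_right Rplus 0 (map f (flat_map (fun z => [true :: z; false :: z]) l)) =
  fold_right Rplus 0 (map (fun z => f (true :: z) + f (false :: z)) l).
Proof. induction l; simpl; [reflexivity|]. rewrite IHl; ring. Qed.

Lemma cube_sum_S m f : cube_sum (S m) f = cube_sum m (fun z => f (true :: z) + f (false :: z)).
Proof. unfold cube_sum; simpl. apply fr_flat. Qed.

Lemma cube_sum_last m : forall f, cube_sum (S m) f = cube_sum m (fun z => f (z ++ [true]) + f (z ++ [false])).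
Proof.
  induction m; intros f.
  - rewrite cube_sum_S. reflexivity.
  - rewrite cube_sum_S. rewrite IHm. rewrite cube_sum_S. apply cube_sum_ext_in.
    intros z _. simpl. ring.
Qed.

Lemma cube_sum_le m f g : (forall z, f z <= g z) -> cube_sum m f <= cube_sum m g.
Proof. intros H; unfold cube_sum. generalize (cube m) as l. induction l as [|a l IHl]; simpl; [lra|]. specialize (H a); lra. Qed.

Lemma cube_sum_pos m f : (forall z, 0 < f z) -> 0 < cube_sum m f.
Proof.
  intros H; unfold cube_sum. pose proof (cube_nonnil m).
  destruct (cube m) as [|a l]; [congruence|]. simpl.
  assert (0 <= fold_right Rplus 0 (map f l)).
  { clear -H. induction l; simpl; [lra|]. specialize (H a); lra. }
  specialize (H a); lra.
Qed.

Lemma cube_sum_plus m f g : cube_sum m (fun z => f z + g z) = cube_sum m f + cube_sum m g.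
Proof. unfold cube_sum; induction (cube m); simpl; [ring|]. rewrite IHl; ring. Qed.

Lemma cube_sum_scal m c f : cube_sum m (fun z => c * f z) = c * cube_sum m f.
Proof. unfold cube_sum; induction (cube m); simpl; [ring|]. rewrite IHl; ring. Qed.

Lemma cube_sum_zero m : cube_sum m (fun _ => 0) = 0.
Proof. unfold cube_sum; induction (cube m); simpl; [ring|]. rewrite IHl; ring. Qed.

Lemma cube_sum_rsum m k F : cube_sum m (fun z => rsum k (fun j => F z j)) = rsum k (fun j => cube_sum m (fun z => F z j)).
Proof.
  induction k; simpl. - apply cube_sum_zero.
  - rewrite cube_sum_plus, IHk. reflexivity.
Qed.

Lemma fr_deriv (l : list (list bool)) (h : list bool -> R -> R) h' x :
  (forall z, is_derive (h z) x (h' z)) ->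
  is_derive (fun t => fold_right Rplus 0 (map (fun z => h z t) l)) x (fold_right Rplus 0 (map h' l)).
Proof.
  intros H. induction l; simpl.
  - apply (is_derive_const (K:=R_AbsRing) 0 x).
  - apply (is_derive_plus (K:=R_AbsRing) (h a) (fun t => fold_right Rplus 0 (map (fun z => h z t) l))); auto.
Qed.

Lemma spin_app_lt z b i : (i < length z)%nat -> spin (z ++ [b]) i = spin z i.
Proof. intros H; unfold spin. rewrite app_nth1 by auto. reflexivity. Qed.

Lemma spin_app_eq z b : spin (z ++ [b]) (length z) = if b then 1 else -1.
Proof. unfold spin. rewrite app_nth2 by lia. rewrite Nat.sub_diag. reflexivity. Qed.

Lemma Kzero m A (hsym : forall i j, (i < S m)%nat -> (j < S m)%nat -> A i j = A j i) k (Hk : (k < m)%nat) :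
  cube_sum (S m) (fun z => exp (ising_energy (S m) A (fun _ => 0) z)
     * exp (- rsum m (fun j => A m j * spin z m * spin z j)) * (spin z m * spin z k)) = 0.
Proof.
  rewrite cube_sum_last. transitivity (cube_sum m (fun _ => 0)); [|apply cube_sum_zero]. apply cube_sum_ext_in.
  intros z Hz. pose proof (cube_len _ _ Hz) as Hl.
  set (E0 := rsum m (fun j => rsum j (fun i => A i j * spin z i * spin z j))).
  set (P := rsum m (fun i => A m i * spin z i)).
  assert (Hb : forall b, exp (ising_energy (S m) A (fun _ => 0) (z ++ [b]))
     * exp (- rsum m (fun j => A m j * spin (z ++ [b]) m * spin (z ++ [b]) j))
     * (spin (z ++ [b]) m * spin (z ++ [b]) k) = exp E0 * ((if b then 1 else -1) * spin z k)).
  { intros b.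
    assert (Hs : forall i, (i < m)%nat -> spin (z ++ [b]) i = spin z i)
      by (intros i Hi; apply spin_app_lt; lia).
    assert (Hm : spin (z ++ [b]) m = if b then 1 else -1) by (rewrite <- Hl; apply spin_app_eq).
    set (sb := if b then 1 else -1) in *.
    assert (HE : ising_energy (S m) A (fun _ => 0) (z ++ [b]) = E0 + sb * P).
    { unfold ising_energy. cbn [rsum]. idtac.
      rewrite (rsum_ext m (fun i => 0 * spin (z ++ [b]) i) (fun _ => 0)) by (intros; ring).
      rewrite rsum_zero.
      assert (E1 : rsum m (fun j => rsum j (fun i => A i j * spin (z ++ [b]) i * spin (z ++ [b]) j)) = E0).
      { apply rsum_ext; intros j Hj; apply rsum_ext; intros i Hi. rewrite !Hs by lia; ring. }
      assert (E2 : rsum m (fun i => A i m * spin (z ++ [b]) i * spin (z ++ [b]) m) = sb * P).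
      { unfold P. rewrite <- rsum_scal. apply rsum_ext; intros i Hi.
        rewrite Hs, Hm, (hsym i m) by lia. ring. }
      rewrite E1, E2. ring. }
    assert (HL : rsum m (fun j => A m j * spin (z ++ [b]) m * spin (z ++ [b]) j) = sb * P).
    { unfold P. rewrite <- rsum_scal. apply rsum_ext; intros i Hi.
      rewrite Hm, Hs by lia. ring. }
    rewrite HE, HL, Hm, (Hs k Hk). rewrite <- exp_plus.
    replace (E0 + sb * P + - (sb * P)) with E0 by ring. reflexivity. }
  cbv beta. rewrite (Hb true), (Hb false). ring.
Qed.

Lemma rsum_split (a b : nat) f : rsum (a + b)%nat f = rsum a f + rsum b (fun j => f (a + j)%nat).
Proof. induction b. - rewrite Nat.add_0_r; simpl; ring. - rewrite Nat.add_succ_r. cbn [rsum]. rewrite IHb; ring. Qed.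

Lemma dexp a b c t0 : is_derive (fun t => a * exp (- (b + c * (t - t0)))) t0 (a * exp (- b) * (- c)).
Proof.
  auto_derive; [auto|]. replace (b + c * (t0 + - t0)) with b by ring. ring.
Qed.

Lemma rmax_abs a : Rmax a 0 + Rmax (- a) 0 = Rabs a.
Proof. unfold Rmax, Rabs. destruct (Rle_dec a 0), (Rle_dec (-a) 0), (Rcase_abs a); lra. Qed.

Theorem mainTheorem4 (n : nat) (A : nat -> nat -> R) (lam : R)
  (hn : (2 <= n)%nat)
  (hsym : forall i j, (i < n)%nat -> (j < n)%nat -> A i j = A j i)
  (hdiag : forall i, (i < n)%nat -> A i i = 0)
  (hlam : forall i, (i < n)%nat -> rsum n (fun j => Rabs (A i j)) <= lam) :
  let vstar : nat -> R := fun i => A (n - 1)%nat i in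
  let wstar : nat -> R := piBD lam (n - 1) vstar in
  in_simplex lam (2 * n - 1) wstar /\
  (forall i, (i < 2 * n - 1)%nat ->
     derivable_pt_lim (fun t => Stilde n A (upd wstar i t)) (wstar i) 0) /\
  (forall w, in_simplex lam (2 * n - 1) w -> Stilde n A wstar <= Stilde n A w).
Proof.
  intros vstar wstar. subst vstar wstar.
  destruct n as [|m]; [lia|].
  replace (S m - 1)%nat with m by lia.
  replace (2 * S m - 1)%nat with (S (2 * m)) by lia.
  set (wstar := piBD lam m (fun i => A m i)).
  assert (W1 : forall j, (j < m)%nat -> wstar j = Rmax (A m j) 0).
  { intros j Hj. unfold wstar, piBD. rewrite (proj2 (Nat.ltb_lt j m) Hj). reflexivity. }
  assert (W2 : forall j, (j < m)%nat -> wstar (m + j)%nat = Rmax (- A m j) 0).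
  { intros j Hj. unfold wstar, piBD.
    rewrite (proj2 (Nat.ltb_ge (m + j) m)) by lia.
    rewrite (proj2 (Nat.ltb_lt (m + j) (2 * m))) by lia.
    replace (m + j - m)%nat with j by lia. reflexivity. }
  assert (W3 : wstar (2 * m)%nat = lam - l1norm m (fun i => A m i)).
  { unfold wstar, piBD.
    rewrite (proj2 (Nat.ltb_ge (2 * m) m)) by lia.
    rewrite (proj2 (Nat.ltb_ge (2 * m) (2 * m))) by lia. reflexivity. }
  assert (Wd : forall j, (j < m)%nat -> wstar j - wstar (m + j)%nat = A m j).
  { intros j Hj. rewrite W1, W2 by auto. unfold Rmax.
    destruct (Rle_dec (A m j) 0), (Rle_dec (- A m j) 0); lra. }
  assert (Hl1 : l1norm m (fun i => A m i) <= lam).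
  { pose proof (hlam m ltac:(lia)) as H. cbn [rsum] in H. unfold l1norm.
    pose proof (Rabs_pos (A m m)). lra. }
  set (E := fun z => ising_energy (S m) A (fun _ => 0) z).
  set (D := cube_sum (S m) (fun z => exp (E z))).
  assert (HD : 0 < D) by (apply cube_sum_pos; intros; apply exp_pos).
  assert (Seq : forall w, Stilde (S m) A w = cube_sum (S m) (fun z => exp (E z) *
      exp (- rsum m (fun j => (w j - w (m + j)%nat) * spin z m * spin z j))) / D).
  { intros w. unfold Stilde, ising_expect. replace (S m - 1)%nat with m by lia. reflexivity. }
  set (L := fun z => rsum m (fun j => A m j * spin z m * spin z j)).
  assert (HK : forall k, (k < m)%nat ->
    cube_sum (S m) (fun z => exp (E z) * exp (- L z) * (spin z m * spin z k)) = 0).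
  { intros k Hk. apply Kzero; auto. }
  split; [|split].
  -
    split.
    + intros i Hi.
      destruct (Nat.lt_ge_cases i m) as [H1|H1].
      * rewrite W1 by auto. apply Rmax_r.
      * destruct (Nat.lt_ge_cases i (2 * m)) as [H2|H2].
        -- replace i with (m + (i - m))%nat by lia. rewrite W2 by lia. apply Rmax_r.
        -- replace i with (2 * m)%nat by lia. rewrite W3. lra.
    + cbn [rsum]. replace (2 * m)%nat with (m + m)%nat at 1 by lia.
      rewrite rsum_split, W3.
      rewrite (rsum_ext m wstar (fun j => Rmax (A m j) 0)) by auto.
      rewrite (rsum_ext m (fun j => wstar (m + j)%nat) (fun j => Rmax (- A m j) 0)) by auto.
      rewrite <- rsum_plus.
      rewrite (rsum_ext m _ (fun j => Rabs (A m j))) by (intros; apply rmax_abs).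
      unfold l1norm. ring.
  -
    intros i Hi.
    assert (Hsh : exists sigma k, (k < m)%nat /\ forall t j, (j < m)%nat ->
       upd wstar i t j - upd wstar i t (m + j)%nat = A m j + (if Nat.eqb j k then sigma * (t - wstar i) else 0)).
    { unfold upd.
      destruct (Nat.lt_ge_cases i m) as [H1|H1].
      - exists 1, i. split; auto. intros t j Hj.
        destruct (Nat.eqb_spec (m + j) i); [lia|].
        destruct (Nat.eqb_spec j i) as [->|Hne].
        + rewrite <- (Wd i) by auto. ring.
        + rewrite <- (Wd j) by auto. ring.
      - destruct (Nat.lt_ge_cases i (2 * m)) as [H2|H2].
        + exists (-1), (i - m)%nat. split; [lia|]. intros t j Hj.
          destruct (Nat.eqb_spec j i); [lia|].
          destruct (Nat.eqb_spec (m + j) i) as [Hmj|Hmj].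
          * destruct (Nat.eqb_spec j (i - m)); [|lia].
            rewrite <- (Wd j) by auto. rewrite Hmj. ring.
          * destruct (Nat.eqb_spec j (i - m)); [lia|].
            rewrite <- (Wd j) by auto. ring.
        + exists 0, 0%nat. split; [lia|]. intros t j Hj.
          destruct (Nat.eqb_spec j i); [lia|].
          destruct (Nat.eqb_spec (m + j) i); [lia|].
          rewrite <- (Wd j) by auto. destruct (Nat.eqb j 0); ring. }
    destruct Hsh as [sigma [k [Hk Hsh]]].
    apply is_derive_Reals.
    set (t0 := wstar i).
    apply (is_derive_ext (fun t => cube_sum (S m) (fun z => exp (E z) *
        exp (- (L z + (sigma * (spin z m * spin z k)) * (t - t0)))) * / D)).
    { intros t. rewrite Seq. unfold Rdiv. f_equal. apply cube_sum_ext_in. intros z _.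
      f_equal. f_equal. f_equal. symmetry. unfold L.
      rewrite (rsum_ext m (fun j => (upd wstar i t j - upd wstar i t (m + j)%nat) * spin z m * spin z j) (fun j => A m j * spin z m * spin z j +
           (if Nat.eqb j k then sigma * (t - t0) else 0) * (spin z m * spin z j))).
      - rewrite rsum_plus, rsum_delta by auto. ring.
      - intros j Hj. rewrite Hsh by auto. unfold t0; destruct (Nat.eqb j k); ring. }
    replace 0 with (cube_sum (S m) (fun z => exp (E z) * exp (- L z) * (- (sigma * (spin z m * spin z k)))) * / D).
    + apply (is_derive_scal_l (K:=R_AbsRing) (V:=R_NormedModule)
         (fun t => cube_sum (S m) (fun z => exp (E z) *
          exp (- (L z + (sigma * (spin z m * spin z k)) * (t - t0)))))).
      unfold cube_sum. apply fr_deriv. intros z. apply dexp.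
    + rewrite (cube_sum_ext_in (S m) _ (fun z => (- sigma) * (exp (E z) * exp (- L z) * (spin z m * spin z k))))
        by (intros; ring).
      rewrite cube_sum_scal, HK by auto. ring.
  -
    intros w _. rewrite !Seq. unfold Rdiv.
    apply Rmult_le_compat_r; [left; apply Rinv_0_lt_compat; auto|].
    set (d := fun j => (w j - w (m + j)%nat) - A m j).
    set (G := fun z => exp (E z) * exp (- L z)).
    set (Rz := fun z => rsum m (fun j => d j * (spin z m * spin z j))).
    assert (H0 : cube_sum (S m) (fun z => G z * Rz z) = 0).
    { unfold Rz. rewrite (cube_sum_ext_in (S m) _ (fun z => rsum m (fun j => d j * (G z * (spin z m * spin z j))))).
      - rewrite cube_sum_rsum. rewrite (rsum_ext m _ (fun _ => 0)); [apply rsum_zero|].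
        intros j Hj. rewrite cube_sum_scal. unfold G. rewrite HK by auto. ring.
      - intros z _. rewrite <- rsum_scal. apply rsum_ext; intros; ring. }
    apply Rle_trans with (cube_sum (S m) (fun z => G z - G z * Rz z)).
    + unfold Rminus. rewrite cube_sum_plus.
      rewrite (cube_sum_ext_in (S m) (fun z => - (G z * Rz z)) (fun z => (-1) * (G z * Rz z))) by (intros; ring).
      rewrite cube_sum_scal, H0. apply Req_le.
      rewrite Rmult_0_r, Rplus_0_r. apply cube_sum_ext_in. intros z _. unfold G, L.
      f_equal. f_equal. f_equal. apply rsum_ext. intros j Hj. rewrite <- (Wd j) by auto. ring.
    + apply cube_sum_le. intros z.
      assert (HLw : rsum m (fun j => (w j - w (m + j)%nat) * spin z m * spin z j) = L z + Rz z).
      { unfold L, Rz. rewrite <- rsum_plus. apply rsum_ext. intros; unfold d; ring. }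
      rewrite HLw. replace (- (L z + Rz z)) with (- L z + - Rz z) by ring.
      rewrite exp_plus. unfold G.
      pose proof (exp_ineq1_le (- Rz z)). pose proof (exp_pos (E z)). pose proof (exp_pos (- L z)).
      assert (0 < exp (E z) * exp (- L z)) by (apply Rmult_lt_0_compat; auto).
      assert (exp (E z) * exp (- L z) * (1 + - Rz z) <= exp (E z) * exp (- L z) * exp (- Rz z))
        by (apply Rmult_le_compat_l; lra).
      nra.
Qed.
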